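(* Let $n_1,n_2,n_3\in\mathbb{N}$, let $\sigma$ be a segment label map on $G=\{1,\dots,n_1\}\times\{1,\dots,n_2\}\times\{1,\dots,n_3\}$, fix any decomposition of $T$ into blocks, let $\tau=\mathrm{LABEL}(\sigma,T)$ and let $\tau'$ be the output of the block-wise method. Then for all 1-cells $t_1\in T$: $\tau(t_1)=0\Leftrightarrow\tau'(t_1)=0$.
   Context: Voxel grid and segmentation: $G=\{1,\dots,n_1\}\times\{1,\dots,n_2\}\times\{1,\dots,n_3\}$; voxels $v,w$ are adjacent iff $\sum_i|v_i-w_i|=1$. A segment label map is $\sigma:G\to\mathbb{N}=\{1,2,\dots\}$ such that each level set $\sigma^{-1}(l)$ is connected w.r.t. this adjacency. Topological grid: $T=\{1,\dots,2n_1-1\}\times\{1,\dots,2n_2-1\}\times\{1,\dots,2n_3-1\}$; a cell with exactly $j$ odd coordinates is a $j$-cell. Voxel $r$ corresponds to the 3-cell $2r-1$. Two cells are 6-neighbors if they differ by $1$ in exactly one coordinate. For a $j$-cell $t$, $\Gamma(t)$ is the set of 6-neighbors of $t$ in $T$ that are $(j+1)$-cells. Cells $t_1,t_2$ are connected, $t_1\leftrightarrow t_2$, iff there is $t\in T$ with $t_1,t_2\in\Gamma(t)$. Procedure LABEL: for a voxel box $\prod_i\{a_i,\dots,b_i\}\subseteq G$ let $B=\prod_i\{2a_i-1,\dots,2b_i-1\}$ be its cell box. $\mathrm{LABEL}(\sigma,B)$ produces $\lambda:B\to\mathbb{N}_0$: (1) $\lambda(2r-1)=\sigma(r)$ for 3-cells.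 (2) For $j=2,1,0$ in this order: for each $j$-cell $t\in B$ let $\theta(t)$ be the set of positive integers occurring exactly once in $(\lambda(s))_{s\in\Gamma(t)}$; $t$ is active iff $\theta(t)\ne\emptyset$, inactive $j$-cells get label $0$; the active $j$-cells of $B$ are partitioned into maximal sets of cells with equal $\theta$ that are connected by $\leftrightarrow$-paths inside the set; these classes are numbered $1,\dots,m_j(B)$ arbitrarily and each active $j$-cell gets its class number. Reference labeling: $\tau=\mathrm{LABEL}(\sigma,T)$. Block-wise method: for each axis $i$ choose odd integers $1=a^i_0<\dots<a^i_{m_i}=2n_i-1$; blocks are the boxes $\prod_i\{a^i_{k_i-1},\dots,a^i_{k_i}\}$. Step 1: $\lambda_B=\mathrm{LABEL}(\sigma,B)$ for each block. Step 2: with blocks ordered $B_1,\dots,B_K$, add offset $\sum_{k'<k}m_j(B_{k'})$ to each positive $j$-cell label of $\lambda_{B_k}$ ($j\in\{0,1,2\}$). Step 3: for $j\in\{1,2\}$, via union–find, unite the labels received in different blocks by any active $j$-cell lying in several blocks, and replace every positive $j$-cell label by its set representative. Step 4: for each 0-cell $t_0$ and each pair of distinct 1-cell labels occurring exactly once among the current labels of $\Gamma(t_0)$, merge the two labels if the corresponding 1-cells bound the same set of current 2-cell labels; if any merge took place at $t_0$, recompute the activity of $t_0$ and set its label to $0$ if inactive. The result is $\tau':T\to\mathbb{N}_0$. *)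

(* Defs.v *)
From Stdlib Require Import Relations.
From mathcomp Require Import all_boot.

Set Implicit Arguments.
Unset Strict Implicit.
Unset Printing Implicit Defensive.

(* Cells / voxels are integer triples; boxes are (lower, upper) corners *)
Definition cell := (nat * nat * nat)%type.
Definition box := (cell * cell)%type.

Definition cx (t : cell) : nat := t.1.1.
Definition cy (t : cell) : nat := t.1.2.
Definition cz (t : cell) : nat := t.2.

(* number of odd coordinates: t is a (dimc t)-cell *)
Definition dimc (t : cell) : nat := odd (cx t) + odd (cy t) + odd (cz t).

Definition in_box (B : box) (t : cell) : bool :=
  [&& cx B.1 <= cx t <= cx B.2, cy B.1 <= cy t <= cy B.2
    & cz B.1 <= cz t <= cz B.2].

Definition in_grid (n : cell) (r : cell) : bool := in_box ((1, 1, 1), n) r.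

Definition Tbox (n : cell) : box :=
  ((1, 1, 1), ((cx n).*2.-1, (cy n).*2.-1, (cz n).*2.-1)).

(* voxel r <-> 3-cell 2r-1 ; for an odd coordinate c = 2r-1, r = c./2 + 1 *)
Definition vox (t : cell) : cell := ((cx t)./2.+1, (cy t)./2.+1, (cz t)./2.+1).

Definition absdist (a b : nat) : nat := (a - b) + (b - a).
Definition adj (v w : cell) : bool :=
  absdist (cx v) (cx w) + absdist (cy v) (cy w) + absdist (cz v) (cz w) == 1.

Fixpoint chain (R : cell -> cell -> Prop) (x : cell) (p : seq cell) : Prop :=
  if p is y :: q then R x y /\ chain R y q else True.

Definition segment_map (n : cell) (sigma : cell -> nat) : Prop :=
  (forall r, in_grid n r -> 0 < sigma r) /\
  (forall r s, in_grid n r -> in_grid n s -> sigma r = sigma s ->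
     exists p : seq cell, chain (fun v w => adj v w) r p /\ last r p = s /\
       all (fun v => in_grid n v && (sigma v == sigma r)) p).

Definition nb6 (t : cell) : seq cell :=
  let '(x, y, z) := t in
  [:: (x.+1, y, z); (x.-1, y, z); (x, y.+1, z); (x, y.-1, z);
      (x, y, z.+1); (x, y, z.-1)].

Definition Gamma (n : cell) (t : cell) : seq cell :=
  [seq s <- nb6 t | in_box (Tbox n) s && (dimc s == (dimc t).+1)].

Definition conn (n : cell) (t1 t2 : cell) : Prop :=
  exists t, in_box (Tbox n) t /\ t1 \in Gamma n t /\ t2 \in Gamma n t.

Definition theta (n : cell) (lam : cell -> nat) (t : cell) (v : nat) : bool :=
  (0 < v) && (count (fun s => lam s == v) (Gamma n t) == 1).

Definition active (n : cell) (lam : cell -> nat) (t : cell) : bool :=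
  has (fun s => theta n lam t (lam s)) (Gamma n t).

Definition same_theta (n : cell) (lam : cell -> nat) (t1 t2 : cell) : Prop :=
  forall v, theta n lam t1 v = theta n lam t2 v.

Definition same_class (n : cell) (lam : cell -> nat) (B : box) (t1 t2 : cell)
  : Prop :=
  exists p : seq cell, chain (conn n) t1 p /\ last t1 p = t2 /\
    forall s, s \in t1 :: p ->
      [/\ in_box B s, dimc s = dimc t1, active n lam s & same_theta n lam s t1].

(* lam is a possible output of LABEL(sigma, B) (for some numbering of the
   classes); m j = m_j(B) is the number of classes of active j-cells *)
Definition is_LABEL (n : cell) (sigma : cell -> nat) (B : box)
    (lam : cell -> nat) (m : nat -> nat) : Prop :=
  [/\ (forall t, in_box B t -> dimc t = 3 -> lam t = sigma (vox t)),
      (forall t, in_box B t -> dimc t <= 2 -> ~~ active n lam t -> lam t = 0),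
      (forall t, in_box B t -> dimc t <= 2 -> active n lam t ->
         0 < lam t <= m (dimc t)),
      (forall t1 t2, in_box B t1 -> in_box B t2 -> dimc t1 <= 2 ->
         dimc t2 = dimc t1 -> active n lam t1 -> active n lam t2 ->
         (lam t1 = lam t2 <-> same_class n lam B t1 t2))
    & (forall j l, j <= 2 -> 0 < l <= m j ->
         exists t, [/\ in_box B t, dimc t = j, active n lam t & lam t = l])].

Definition valid_breaks (n : nat) (a : seq nat) : bool :=
  [&& head 0 a == 1, last 0 a == n.*2.-1, all odd a & sorted ltn a].

Fixpoint consec (s : seq nat) : seq (nat * nat) :=
  match s with
  | x :: ((y :: _) as s') => (x, y) :: consec s'
  | _ => [::]
  end.

(* the intervals {a_(k-1), ..., a_k}; the degenerate chain [:: 1] (only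
   possible for n = 1) is read as the single interval {1} *)
Definition intervals (a : seq nat) : seq (nat * nat) :=
  if a is [:: x] then [:: (x, x)] else consec a.

Definition all_blocks (a1 a2 a3 : seq nat) : seq box :=
  flatten [seq [seq ((p.1, q.1, r.1), (p.2, q.2, r.2))
                   | q <- intervals a2, r <- intervals a3]
          | p <- intervals a1].

Definition box0 : box := ((0, 0, 0), (0, 0, 0)).

Definition offset (ms : nat -> nat -> nat) (k j : nat) : nat :=
  \sum_(k' < k) ms k' j.

Definition lab2 (lams : nat -> cell -> nat) (ms : nat -> nat -> nat)
    (k : nat) (t : cell) : nat :=
  if 0 < lams k t then lams k t + offset ms k (dimc t) else 0.

Definition unite3 (n : cell) (blocks : seq box) (lams : nat -> cell -> nat)
    (ms : nat -> nat -> nat) (j : nat) (x y : nat) : Prop :=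
  exists k k' t,
    [/\ k < size blocks, k' < size blocks,
        in_box (nth box0 blocks k) t, in_box (nth box0 blocks k') t
      & dimc t = j] /\
    active n (lams k) t /\ active n (lams k') t /\
    lab2 lams ms k t = x /\ lab2 lams ms k' t = y.

Definition E3 n blocks lams ms j : relation nat :=
  clos_refl_sym_trans nat (unite3 n blocks lams ms j).

(* Step 4.  cur = current labels after step 3; E = current equivalence of
   1-cell labels (union-find state). *)
Definition unique_in (n : cell) (cur : cell -> nat) (E : relation nat)
    (t0 : cell) (x : nat) : Prop :=
  (exists s, [/\ s \in Gamma n t0, 0 < cur s & E (cur s) x]) /\
  (forall s s', s \in Gamma n t0 -> s' \in Gamma n t0 -> 0 < cur s ->
     0 < cur s' -> E (cur s) x -> E (cur s') x -> s = s').

Definition merge_at (n : cell) (cur : cell -> nat) (E : relation nat)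
    (t0 : cell) (x y : nat) : Prop :=
  exists s1 s2,
    [/\ s1 \in Gamma n t0, s2 \in Gamma n t0, cur s1 = x, cur s2 = y
      & 0 < x] /\ 0 < y /\ ~ E x y /\
    unique_in n cur E t0 x /\ unique_in n cur E t0 y /\
    [seq cur s | s <- Gamma n s1] =i [seq cur s | s <- Gamma n s2].

Fixpoint step4 (n : cell) (cur : cell -> nat) (E : relation nat)
    (zs : seq cell) : relation nat :=
  match zs with
  | [::] => E
  | t0 :: zs' =>
      step4 n cur
        (clos_refl_sym_trans nat (fun x y => E x y \/ merge_at n cur E t0 x y))
        zs'
  end.

Definition active_cur (n : cell) (cur : cell -> nat) (E : relation nat)
    (t0 : cell) : Prop :=
  exists s, s \in Gamma n t0 /\ 0 < cur s /\ unique_in n cur E t0 (cur s).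

Definition representative (E : relation nat) (rep : nat -> nat) : Prop :=
  (forall x, E (rep x) x) /\ (forall x y, E x y -> rep x = rep y).

(* tau' is a possible output of the block-wise method with the blocks
   ordered as in the list `blocks` *)
Definition blockwise_output (n : cell) (sigma : cell -> nat)
    (blocks : seq box) (tau' : cell -> nat) : Prop :=
  exists (lams : nat -> cell -> nat) (ms : nat -> nat -> nat)
         (rep3 : nat -> nat -> nat) (home : cell -> nat) (zs : seq cell)
         (rep4 : nat -> nat),
  let cur (t : cell) :=
    if 0 < lab2 lams ms (home t) t
    then rep3 (dimc t) (lab2 lams ms (home t) t) else 0 in
  let Ebefore (t : cell) := step4 n cur (@eq nat) (take (index t zs) zs) in
  let Eafter (t : cell) := step4 n cur (@eq nat) (take (index t zs).+1 zs) in
  (forall k, k < size blocks ->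
     is_LABEL n sigma (nth box0 blocks k) (lams k) (ms k)) /\
  representative (E3 n blocks lams ms 1) (rep3 1) /\
  representative (E3 n blocks lams ms 2) (rep3 2) /\
  (* the block from which each cell's stored label is taken *)
  (forall t, in_box (Tbox n) t ->
     home t < size blocks /\ in_box (nth box0 blocks (home t)) t) /\
  (* Step 4: processing order of all 0-cells *)
  uniq zs /\
  (forall t, (t \in zs) = in_box (Tbox n) t && (dimc t == 0)) /\
  representative (step4 n cur (@eq nat) zs) rep4 /\
  (forall t, in_box (Tbox n) t -> dimc t = 3 -> tau' t = sigma (vox t)) /\
  (forall t, in_box (Tbox n) t -> dimc t = 2 -> tau' t = cur t) /\
  (forall t, in_box (Tbox n) t -> dimc t = 1 ->
     tau' t = if 0 < cur t then rep4 (cur t) else 0) /\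
  (forall t, in_box (Tbox n) t -> dimc t = 0 ->
     ((exists x y, merge_at n cur (Ebefore t) t x y) /\
        ~ active_cur n cur (Eafter t) t -> tau' t = 0) /\
     (~ ((exists x y, merge_at n cur (Ebefore t) t x y) /\
          ~ active_cur n cur (Eafter t) t) ->
        tau' t = lab2 lams ms (home t) t)).

(* Main.v *)
Require Import Defs.
From Stdlib Require Import Relations.
From mathcomp Require Import all_boot.
From mathcomp Require Import zify.
Set Implicit Arguments.
Unset Strict Implicit.

Definition gclosed (n : cell) (B : box) : Prop :=
  forall t s, in_box B t -> s \in Gamma n t -> in_box B s.

Lemma gamma_dim n t s : s \in Gamma n t -> dimc s = (dimc t).+1.
Proof. by rewrite mem_filter => /andP[/andP[_ /eqP]]. Qed.

Lemma gamma_T n t s : s \in Gamma n t -> in_box (Tbox n) s.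
Proof. by rewrite mem_filter => /andP[/andP[]]. Qed.

Lemma agree n (lam lam' : cell -> nat) s : {in Gamma n s, lam =1 lam'} ->
  active n lam s = active n lam' s /\ (forall v, theta n lam s v = theta n lam' s v).
Proof.
move=> H.
have Ht : forall v, theta n lam s v = theta n lam' s v.
  move=> v; rewrite /theta; congr (_ && (_ == 1)).
  by apply: eq_in_count => u /H ->.
split => //; rewrite /active; apply: eq_in_has => u Hu /=.
by rewrite Ht H.
Qed.

Definition lam3 (sigma : cell -> nat) : cell -> nat := fun t => sigma (vox t).

Section L.
Variables (n : cell) (sigma : cell -> nat) (B : box) (lam : cell -> nat) (m : nat -> nat).
Hypothesis HL : is_LABEL n sigma B lam m.
Hypothesis HB : gclosed n B.

Lemma lab_cell2 s : in_box B s -> dimc s = 2 ->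
  active n lam s = active n (lam3 sigma) s /\
  (forall v, theta n lam s v = theta n (lam3 sigma) s v).
Proof.
move=> Bs ds; apply: agree => u Hu.
case: HL => H1 _ _ _ _; apply: H1; first exact: HB _ _ Bs Hu.
by rewrite (gamma_dim Hu) ds.
Qed.

Lemma lab_pos s : in_box B s -> dimc s <= 2 -> (0 < lam s) = active n lam s.
Proof.
move=> Bs ds; case: HL => _ H2 H3 _ _.
case: (boolP (active n lam s)) => a.
  by case/andP: (H3 s Bs ds a).
by rewrite (H2 s Bs ds a).
Qed.

Definition Q (u s : cell) : Prop :=
  (~~ active n (lam3 sigma) u /\ ~~ active n (lam3 sigma) s) \/
  (active n (lam3 sigma) u /\ active n (lam3 sigma) s /\
   same_theta n (lam3 sigma) u s).

Lemma pattern t1 u s : in_box B t1 -> in_box (Tbox n) t1 -> dimc t1 = 1 ->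
  u \in Gamma n t1 -> s \in Gamma n t1 -> (lam u = lam s <-> Q u s).
Proof.
move=> Bt Tt dt Hu Hs.
have Bu : in_box B u by exact: HB _ _ Bt Hu.
have Bs : in_box B s by exact: HB _ _ Bt Hs.
have du : dimc u = 2 by rewrite (gamma_dim Hu) dt.
have ds : dimc s = 2 by rewrite (gamma_dim Hs) dt.
have [Au Tu] := lab_cell2 Bu du; have [As Ts] := lab_cell2 Bs ds.
have Pu := lab_pos Bu (eq_leq du); have Ps := lab_pos Bs (eq_leq ds).
rewrite /Q -Au -As.
case: (boolP (active n lam u)) => au; case: (boolP (active n lam s)) => as_.
- case: HL => _ _ _ H4 _.
  rewrite (H4 u s Bu Bs (eq_leq du) (etrans ds (esym du)) au as_).
  split.
  + case=> p [ch [lst Hp]]; right; do 2 split => //.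
    have : s \in u :: p by rewrite -lst mem_last.
    case/Hp => _ _ _ st v; by rewrite -Tu -Ts st.
  + case=> [[h _]|[_ [_ st]]]; first by [].
    exists [:: s]; split; first by split => //; exists t1.
    split => // w; rewrite !inE => /orP[/eqP->|/eqP->].
      by split => //.
    by split => //; [rewrite ds du | move=> v; rewrite Ts Tu st].
- have h : lam s = 0 by apply/eqP; rewrite -leqn0 leqNgt Ps.
  split; last by case=> [[h' _]|[_ [h' _]]]; [by [] | by []].
  by move=> E; move: Pu; rewrite E h au.
- have h : lam u = 0 by apply/eqP; rewrite -leqn0 leqNgt Pu.
  split; last by case=> [[_ h']|[h' _]]; [by [] | by []].
  by move=> E; move: Ps; rewrite -E h as_.
- have hu : lam u = 0 by apply/eqP; rewrite -leqn0 leqNgt Pu.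
  have hs : lam s = 0 by apply/eqP; rewrite -leqn0 leqNgt Ps.
  by rewrite hu hs; split => // _; left.
Qed.

End L.

Lemma active_eq n sigma B1 lam1 m1 B2 lam2 m2 t1 :
  is_LABEL n sigma B1 lam1 m1 -> gclosed n B1 ->
  is_LABEL n sigma B2 lam2 m2 -> gclosed n B2 ->
  in_box B1 t1 -> in_box B2 t1 -> in_box (Tbox n) t1 -> dimc t1 = 1 ->
  active n lam1 t1 = active n lam2 t1.
Proof.
move=> L1 G1 L2 G2 B1t B2t Tt dt.
rewrite /active; apply: eq_in_has => s Hs /=; rewrite /theta.
have ds : dimc s = 2 by rewrite (gamma_dim Hs) dt.
congr (_ && (_ == 1)).
  rewrite (lab_pos L1 (G1 _ _ B1t Hs) (eq_leq ds)) (lab_pos L2 (G2 _ _ B2t Hs) (eq_leq ds)).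
  by rewrite (lab_cell2 L1 G1 (G1 _ _ B1t Hs) ds).1 (lab_cell2 L2 G2 (G2 _ _ B2t Hs) ds).1.
apply: eq_in_count => u Hu /=.
apply/eqP/eqP.
  by move/(pattern L1 G1 B1t Tt dt Hu Hs)/(pattern L2 G2 B2t Tt dt Hu Hs).
by move/(pattern L2 G2 B2t Tt dt Hu Hs)/(pattern L1 G1 B1t Tt dt Hu Hs).
Qed.
Lemma coord a b c c' : a <= c <= b -> odd a -> odd b -> odd c' ->
  (c' = c.+1 \/ c' = c.-1) -> a <= c' <= b.
Proof.
move=> /andP[h1 h2] oa ob oc [E|E]; subst c'.
- have : c != b by apply/eqP => E; subst c; rewrite /= ob in oc.
  move=> /eqP ?; apply/andP; split; lia.
- have : c != a by apply/eqP => E; subst c; case: a oa oc h1 {h2} => //= a oa oc _; by rewrite oc in oa.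
  move=> /eqP ?; apply/andP; split; lia.
Qed.


Lemma odd_gclosed n (B : box) :
  [&& odd (cx B.1), odd (cx B.2), odd (cy B.1), odd (cy B.2),
      odd (cz B.1) & odd (cz B.2)] -> gclosed n B.
Proof.
case: B => [[[x1 y1] z1] [[x2 y2] z2]].
rewrite /cx /cy /cz /= => /and5P[ox1 ox2 oy1 oy2 /andP[oz1 oz2]] [[x y] z] s.
rewrite /in_box /cx /cy /cz /= => /and3P[hx hy hz].
rewrite /Gamma mem_filter => /andP[/andP[_ /eqP]].
rewrite /nb6 !inE => Hd /or3P[/eqP E|/eqP E|/orP[/eqP E|/or3P[/eqP E|/eqP E|/eqP E]]];
subst s; move: Hd; rewrite /dimc /cx /cy /cz /= => Hd; apply/and3P; split => //;
apply: coord; eauto;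
rewrite /=; match goal with |- context [odd ?c] => move: Hd; case: (odd c) => //= Hd; exfalso; lia end.
Qed.
Lemma consec_mem (s : seq nat) p : p \in consec s -> p.1 \in s /\ p.2 \in s.
Proof.
elim: s => [|x s IH] //=.
case: s IH => [|y s] IH //=.
rewrite inE => /orP[/eqP->|/IH [h1 h2]] /=.
  by rewrite !inE !eqxx ?orbT.
by split; rewrite inE ?h1 ?h2 orbT.
Qed.

Lemma intervals_mem (a : seq nat) p : p \in intervals a -> p.1 \in a /\ p.2 \in a.
Proof.
rewrite /intervals; case: a => [|x [|y s]] //.
  by rewrite inE => /eqP ->; rewrite /= inE eqxx.
exact: consec_mem.
Qed.

Lemma block_odd n1 n2 n3 a1 a2 a3 (B : box) :
  valid_breaks n1 a1 -> valid_breaks n2 a2 -> valid_breaks n3 a3 ->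
  B \in all_blocks a1 a2 a3 ->
  [&& odd (cx B.1), odd (cx B.2), odd (cy B.1), odd (cy B.2),
      odd (cz B.1) & odd (cz B.2)].
Proof.
move=> /and4P[_ _ o1 _] /and4P[_ _ o2 _] /and4P[_ _ o3 _].
move=> /flattenP [s /mapP [p Hp ->]] /allpairsP [[q r] [/= Hq Hr ->]].
have [p1 p2] := @intervals_mem _ _ Hp.
have [q1 q2] := @intervals_mem _ _ Hq.
have [r1 r2] := @intervals_mem _ _ Hr.
rewrite /cx /cy /cz /=.
by rewrite (allP o1 _ p1) (allP o1 _ p2) (allP o2 _ q1) (allP o2 _ q2) (allP o3 _ r1) (allP o3 _ r2).
Qed.

Definition zinv (R : relation nat) := forall x y, R x y -> (x == 0) = (y == 0).

Lemma crst_inv (R : relation nat) : zinv R -> zinv (clos_refl_sym_trans nat R).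
Proof.
move=> H x y; elim => {x y} [x y /H //|x //|x y _ -> //|x y z _ -> _ -> //].
Qed.

Lemma step4_inv n cur E zs : zinv E -> zinv (step4 n cur E zs).
Proof.
elim: zs E => [|t0 zs IH] E HE //=.
apply: IH; apply: crst_inv => x y [/HE //|].
case=> s1 [s2 [[_ _ _ _ hx] [hy _]]].
by move: hx hy; rewrite !lt0n => /negbTE -> /negbTE ->.
Qed.

Lemma rep_pos E rep : representative E rep -> zinv E -> forall x, 0 < x -> 0 < rep x.
Proof. by case=> H _ HE x; rewrite !lt0n (HE _ _ (H x)). Qed.

Lemma lab2_pos lams ms k t : (0 < lab2 lams ms k t) = (0 < lams k t).
Proof. by rewrite /lab2; case: ifP => h //; rewrite addn_gt0 h. Qed.

Unset Implicit Arguments.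

Theorem proposition4 (n1 n2 n3 : nat) (sigma : cell -> nat)
    (a1 a2 a3 : seq nat) (blocks : seq box) (tau tau' : cell -> nat)
    (mT : nat -> nat) :
  segment_map (n1, n2, n3) sigma ->
  valid_breaks n1 a1 -> valid_breaks n2 a2 -> valid_breaks n3 a3 ->
  perm_eq blocks (all_blocks a1 a2 a3) ->
  is_LABEL (n1, n2, n3) sigma (Tbox (n1, n2, n3)) tau mT ->
  blockwise_output (n1, n2, n3) sigma blocks tau' ->
  forall t1 : cell, in_box (Tbox (n1, n2, n3)) t1 -> dimc t1 = 1 ->
    (tau t1 = 0 <-> tau' t1 = 0).
Proof.
move=> _ v1 v2 v3 pb LT [lams [ms [rep3 [home [zs [rep4 H]]]]]] t1 Tt dt.
move: H; cbv zeta.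
move=> [HL [R31 [R32 [Hhome [_ [_ [R4 [_ [_ [H1 _]]]]]]]]]].
set n := (n1, n2, n3).
have [hk Bt] := Hhome t1 Tt.
set k := home t1 in hk Bt *.
set B := nth box0 blocks k in Bt *.
have LB := HL k hk.
have GB : gclosed n B.
  apply: odd_gclosed; apply: (block_odd v1 v2 v3).
  by rewrite -(perm_mem pb) mem_nth.
have GT : gclosed n (Tbox n) by move=> t s _; apply: gamma_T.
have Ea := active_eq LT GT LB GB Tt Bt Tt dt.
have Pt := lab_pos LT Tt (leq_trans (eq_leq dt) (isT : 1 <= 2)).
have Pb := lab_pos LB Bt (leq_trans (eq_leq dt) (isT : 1 <= 2)).
have Z3 : zinv (E3 n blocks lams ms 1).
  apply: crst_inv => x y [k1 [k2 [t [[hk1 hk2 Bt1 Bt2 dt1] [a1' [a2' [<- <-]]]]]]].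
  case: (HL k1 hk1) => _ _ H3 _ _; case: (HL k2 hk2) => _ _ H3' _ _.
  have dt1' : dimc t <= 2 by rewrite dt1.
  have := H3 t Bt1 dt1' a1'; have := H3' t Bt2 dt1' a2'.
  case/andP => p2 _; case/andP => p1 _.
  by move: p1 p2; rewrite -!(lab2_pos lams ms) !lt0n => /negbTE -> /negbTE ->.
have Z4 : zinv (step4 n (fun t => if 0 < lab2 lams ms (home t) t
    then rep3 (dimc t) (lab2 lams ms (home t) t) else 0) (@eq nat) zs).
  by apply: step4_inv => x y ->.
rewrite (H1 t1 Tt dt) dt.
have key : (0 < tau t1) = (0 < lams k t1) by rewrite Pt Ea Pb.
have hc : (0 < lab2 lams ms k t1) = (0 < lams k t1) := lab2_pos lams ms k t1.
case: (posnP (lams k t1)) => hl.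
- have : ~~ (0 < lab2 lams ms k t1) by rewrite hc hl.
  move/negbTE => ->; rewrite ltnn; split => // _.
  by apply/eqP; rewrite -leqn0 leqNgt key hl.
- have p3 := rep_pos R31 Z3 (etrans hc hl).
  rewrite hc hl p3.
  have p4 := rep_pos R4 Z4 p3.
  split => h0.
    by move: key; rewrite h0 hl.
  by rewrite h0 in p4.
Qed.
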